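(* For the representation of a symmetric subgroup $T_m(\mathbb{C})\le G\le\mathrm{GL}_m(\mathbb{C})$ on $\mathbb{C}^{m\times n}\otimes\mathbb{C}^{n\times m}$ given by $X\cdot(A\otimes B)=XA\otimes BX^{-1}$, the weight norm equals $N_l=\sqrt2$ and the weight margin satisfies $\gamma_l\ge m^{-3/2}$.
   Context: $T_m(\mathbb{C})$: invertible diagonal matrices; symmetric: Zariski closed and closed under conjugate transposition. For a rational representation $\pi$ of $G$ with weight set $\Omega(\pi)\subset\mathbb{Z}^m$ (the characters $\omega$ such that $\mathrm{diag}(t)$ acts on a weight vector by $t_1^{\omega_1}\cdots t_m^{\omega_m}$), the weight norm is $N(\pi)=\max_{\omega\in\Omega(\pi)}\|\omega\|_2$ and the weight margin is $\gamma(\pi)=\min\{\mathrm{dist}(0,\mathrm{conv}(S)):S\subseteq\Omega(\pi),\ 0\notin\mathrm{conv}(S)\}$, where $\mathrm{dist}(0,\mathrm{conv}(S))$ is the Euclidean distance from the origin to the convex hull. *)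

(* Defs.v *)
From HB Require Import structures.
From mathcomp Require Import all_boot all_order all_algebra.
From mathcomp Require Import complex.
From mathcomp Require Import all_classical all_reals all_analysis.

Set Implicit Arguments.
Unset Strict Implicit.
Unset Printing Implicit Defensive.

Import Order.TTheory GRing.Theory Num.Theory.
Local Open Scope ring_scope.
Local Open Scope classical_set_scope.
Local Open Scope complex_scope.

Section Defs.
Variable R : realType.
Notation C := (R[i]).

Inductive mxpoly_expr (m : nat) : Type :=
| PCst of C
| PEnt of 'I_m & 'I_m
| PAdd of mxpoly_expr m & mxpoly_expr m
| PMul of mxpoly_expr m & mxpoly_expr m.

Fixpoint mxpoly_eval (m : nat) (p : mxpoly_expr m) (X : 'M[C]_m) : C :=
  match p with
  | PCst c => c
  | PEnt i j => X i j
  | PAdd p q => mxpoly_eval p X + mxpoly_eval q X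
  | PMul p q => mxpoly_eval p X * mxpoly_eval q X
  end.

Definition zariski_closed_GL (m : nat) (G : set 'M[C]_m) : Prop :=
  exists P : set (mxpoly_expr m),
    G = [set X | X \in unitmx /\ forall p, P p -> mxpoly_eval p X = 0].

Definition conj_transpose (m : nat) (X : 'M[C]_m) : 'M[C]_m :=
  (map_mx (fun z : C => z^*) X)^T.

Definition is_subgroup_GL (m : nat) (G : set 'M[C]_m) : Prop :=
  [/\ forall X, G X -> X \in unitmx,
      G 1%:M,
      forall X Y, G X -> G Y -> G (X *m Y)
    & forall X, G X -> G (invmx X)].

Definition symmetric_subgroup (m : nat) (G : set 'M[C]_m) : Prop :=
  [/\ is_subgroup_GL G, zariski_closed_GL G
    & forall X, G X -> G (conj_transpose X)].

Definition contains_torus (m : nat) (G : set 'M[C]_m) : Prop :=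
  forall t : 'rV[C]_m, (forall i, t 0 i != 0) -> G (diag_mx t).

(* A tensor T is given by its coordinates: T i j k l is the coefficient of
   E_ij (x) E_kl, so that A (x) B has coordinates A i j * B k l. *)
Definition tensor (m n : nat) := 'I_m -> 'I_n -> 'I_n -> 'I_m -> C.

(* X . (A (x) B) = X A (x) B X^{-1}, extended linearly *)
Definition tens_act (m n : nat) (X : 'M[C]_m) (T : tensor m n) : tensor m n :=
  fun i j k l => \sum_(i' < m) \sum_(l' < m) X i i' * T i' j k l' * invmx X l' l.

Definition weight_set (m n : nat) : set 'rV[int]_m :=
  [set w | exists T : tensor m n,
     (exists i j k l, T i j k l != 0) /\
     forall t : 'rV[C]_m, (forall i, t 0 i != 0) ->
       forall i j k l,
         tens_act (diag_mx t) T i j k l = (\prod_(a < m) t 0 a ^ w 0 a) * T i j k l].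

Definition realvec (m : nat) (w : 'rV[int]_m) : 'rV[R]_m := map_mx (fun z : int => z%:~R) w.

Definition enorm (m : nat) (x : 'rV[R]_m) : R := Num.sqrt (\sum_(a < m) x 0 a ^+ 2).

Definition conv_hull (m : nat) (S : seq 'rV[R]_m) : set 'rV[R]_m :=
  [set x | exists lam : 'I_(size S) -> R,
     [/\ forall a, 0 <= lam a, \sum_a lam a = 1 & x = \sum_a lam a *: S`_a]].

Definition dist0_conv (m : nat) (S : seq 'rV[R]_m) : R :=
  inf [set enorm x | x in conv_hull S].

Definition weight_norm (m n : nat) : R :=
  sup [set enorm (realvec w) | w in @weight_set m n].

(* subsets S of the weight set are represented by (nonempty) lists of weights *)
Definition weight_margin (m n : nat) : R :=
  inf [set dist0_conv (map (@realvec m) S) |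
        S in [set S : seq 'rV[int]_m |
                [/\ S != [::], forall s, s \in S -> @weight_set m n s
                  & ~ conv_hull (map (@realvec m) S) 0]]].

End Defs.

(* Main.v *)
Require Import Defs.
From HB Require Import structures.
From mathcomp Require Import all_boot all_order all_algebra.
From mathcomp Require Import complex.
From mathcomp Require Import all_classical all_reals all_analysis.
From mathcomp Require Import ring lra.
Import Order.TTheory GRing.Theory Num.Theory.
Local Open Scope ring_scope.

Section Core.
Variable R : realType.
Variable m : nat.

Definition vec (i l : 'I_m) : 'rV[R]_m := \row_b ((b == i)%:R - (b == l)%:R).

Lemma sum_delta (s : 'I_m) (F : 'I_m -> R) : \sum_b (b == s)%:R * F b = F s.
Proof.
rewrite (bigD1 s) //= eqxx mul1r big1 ?addr0 // => b /negbTE ->; by rewrite mul0r.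
Qed.

Lemma vec_add (a b c : 'I_m) : vec a b + vec b c = vec a c.
Proof. by apply/rowP => j; rewrite !mxE; ring. Qed.

Lemma vec_self (a : 'I_m) : vec a a = 0.
Proof. by apply/rowP => j; rewrite !mxE subrr. Qed.

Variable k : nat.

Lemma count_scale (V : lmodType R) (F : 'I_k -> V) (L : seq 'I_k) :
  \sum_a (count_mem a L)%:R *: F a = \sum_(j <- L) F j.
Proof.
elim: L => [|x L IH] /=.
  by rewrite big_nil big1 // => a _; rewrite scale0r.
rewrite big_cons -IH.
under eq_bigr do rewrite natrD scalerDl.
rewrite big_split /=; congr (_ + _).
rewrite (bigD1 x) //= eqxx scale1r big1 ?addr0 // => b /negbTE.
by rewrite eq_sym => ->; rewrite scale0r.
Qed.

Lemma count_sum (L : seq 'I_k) : \sum_a (count_mem a L)%:R = (size L)%:R :> R.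
Proof.
elim: L => [|x L IH] /=.
  by rewrite big1.
under eq_bigr do rewrite natrD.
rewrite big_split /= IH (bigD1 x) //= eqxx big1 ?addr0 -?natrD //.
by move=> b /negbTE; rewrite eq_sym => ->.
Qed.

Variables (v : 'I_k -> 'rV[R]_m) (src dst : 'I_k -> 'I_m).
Hypothesis Hv : forall a, v a = vec (src a) (dst a).
Hypothesis H0 : ~ exists lam : 'I_k -> R,
  [/\ forall a, 0 <= lam a, \sum_a lam a = 1 & 0 = \sum_a lam a *: v a].

Definition erel : rel 'I_m := fun i l => [exists a, (src a == i) && (dst a == l)].

Lemma path_list u p : path erel u p ->
  exists L : seq 'I_k, \sum_(j <- L) v j = vec u (last u p).
Proof.
elim: p u => [|w p IH] u /=.
  by move=> _; exists [::]; rewrite big_nil vec_self.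
case/andP => /existsP [a /andP [/eqP sa /eqP da]] /IH [L HL].
exists (a :: L); rewrite big_cons HL Hv sa da vec_add //.
Qed.

Lemma no_cycle a : ~~ connect erel (dst a) (src a).
Proof.
apply/negP => /connectP [p Hp Hl].
have [L HL] := @path_list _ _ Hp.
apply: H0.
set L' := a :: L.
have HL' : \sum_(j <- L') v j = 0 by rewrite big_cons HL -Hl Hv vec_add vec_self.
have sz : (size L')%:R != 0 :> R by rewrite pnatr_eq0.
exists (fun b => (count_mem b L')%:R / (size L')%:R); split.
- by move=> b; rewrite divr_ge0 ?ler0n.
- by rewrite -mulr_suml count_sum divff.
- under eq_bigr do rewrite mulrC -scalerA.
  by rewrite -scaler_sumr count_scale HL' scaler0.
Qed.

Definition pot (u : 'I_m) : nat := #|[set w | connect erel w u]|.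

Lemma pot_lt a : (pot (src a) < pot (dst a))%N.
Proof.
apply: proper_card; apply/properP; split.
  apply/fintype.subsetP => w; rewrite !inE => H; apply: connect_trans H (connect1 _).
  by apply/existsP; exists a; rewrite !eqxx.
exists (dst a); first by rewrite inE connect0.
by rewrite inE no_cycle.
Qed.

Lemma pot_le u : (pot u <= m)%N.
Proof. by rewrite /pot -[X in (_ <= X)%N]card_ord max_card. Qed.

Lemma core (lam : 'I_k -> R) : (forall a, 0 <= lam a) -> \sum_a lam a = 1 ->
  (m%:R ^+ 3)^-1 <= \sum_(b < m) ((\sum_a lam a *: v a) 0 b) ^+ 2.
Proof.
move=> Hl0 Hl1.
set x := \sum_a lam a *: v a.
set q := fun b => (pot b)%:R : R.
have xE b : x 0 b = \sum_a lam a * v a 0 b.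
  by rewrite /x summxE; apply: eq_bigr => a _; rewrite mxE.
have Hip : \sum_b x 0 b * q b = \sum_a lam a * (q (src a) - q (dst a)).
  under eq_bigr do rewrite xE mulr_suml.
  rewrite exchange_big /=; apply: eq_bigr => a _.
  under eq_bigr do rewrite -mulrA.
  rewrite -mulr_sumr; congr (_ * _).
  under eq_bigr do rewrite Hv mxE mulrBl.
  by rewrite sumrB !sum_delta.
have Hq a : q (src a) - q (dst a) <= -1.
  have := pot_lt a; rewrite -(ler_nat R) -addn1 natrD /q; lra.
have H1 : 1 <= \sum_b x 0 b * (- q b).
  under eq_bigr do rewrite mulrN.
  rewrite sumrN Hip -lerNr.
  apply: (@le_trans _ _ (\sum_a lam a * (-1))).
    by apply: ler_sum => a _; apply: ler_wpM2l.
  rewrite -mulr_suml Hl1; lra.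
pose K : R := m%:R ^+ 3.
have Km : K = m%:R * (m%:R ^+ 2) by rewrite /K exprS.
have Kpos : 0 < K.
  rewrite /K exprn_gt0 // ltr0n.
  case: (ltnP 0 k) => hk.
    exact: (leq_ltn_trans (leq0n _) (ltn_ord (src (Ordinal hk)))).
  move: Hl1; rewrite big1 => [|a _]; first by move/eqP; rewrite eq_sym oner_eq0.
  by have := leq_trans (ltn_ord a) hk; rewrite ltn0.
have pw b : 2 * K * (x 0 b * - q b) <= K ^+ 2 * x 0 b ^+ 2 + q b ^+ 2.
  have h := sqr_ge0 (K * x 0 b + q b); nra.
have qb b : q b ^+ 2 <= m%:R ^+ 2.
  have : q b <= m%:R by rewrite /q ler_nat pot_le.
  have : 0 <= q b by rewrite /q ler0n.
  nra.
set X := \sum_(b < m) x 0 b ^+ 2.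
have H2 : 2 * K <= K ^+ 2 * X + K.
  apply: (@le_trans _ _ (\sum_b 2 * K * (x 0 b * - q b))).
    rewrite -mulr_sumr -{1}(mulr1 (2 * K)).
    rewrite ler_pM2l; first exact: H1.
    by rewrite mulr_gt0.
  apply: (@le_trans _ _ (\sum_b (K ^+ 2 * x 0 b ^+ 2 + m%:R ^+ 2))).
    apply: ler_sum => b _; apply: le_trans (pw b) _; rewrite lerD2l; exact: qb.
  rewrite big_split /= -mulr_sumr sumr_const card_ord -/X lerD2l.
  by rewrite -[m%:R ^+ 2 *+ m]mulr_natr -exprSr.
have H3 : 1 <= K * X.
  have : K <= K ^+ 2 * X by lra.
  rewrite expr2 -mulrA; rewrite -{1}(mulr1 K) ler_pM2l //.
have Ki : 0 <= K^-1 by rewrite invr_ge0 ltW.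
have := ler_wpM2l Ki H3.
by rewrite mulr1 mulrA mulVf ?mul1r // lt0r_neq0.
Qed.
End Core.

Section Weights.
Variable R : realType.
Local Notation C := (R[i]).
Local Open Scope complex_scope.
Variables m n : nat.

Lemma inv_diag (t : 'rV[C]_m) : (forall i, t 0 i != 0) ->
  invmx (diag_mx t) = diag_mx (\row_i (t 0 i)^-1).
Proof.
move=> Ht.
have E : diag_mx t *m diag_mx (\row_i (t 0 i)^-1) = 1%:M.
  apply/matrixP => i j; rewrite mul_diag_mx !mxE.
  case: eqVneq => [->|_]; last by rewrite mulr0n mulr0.
  by rewrite !mulr1n divff.
have [U _] := mulmx1_unit E.
by rewrite -[RHS](mulKmx U) E mulmx1.
Qed.

Lemma tens_diag (t : 'rV[C]_m) (T : tensor R m n) i j k l :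
  (forall i, t 0 i != 0) ->
  tens_act (diag_mx t) T i j k l = t 0 i * T i j k l * (t 0 l)^-1.
Proof.
move=> Ht; rewrite /tens_act inv_diag //.
rewrite (bigD1 i) //= [X in _ + X]big1 ?addr0 => [|i' /negbTE ni]; last first.
  by apply: big1 => l' _; rewrite mxE eq_sym ni mulr0n !mul0r.
rewrite (bigD1 l) //= [X in _ + X]big1 ?addr0 => [|l' /negbTE nl]; last first.
  by rewrite [diag_mx _ l' l]mxE nl mulr0n mulr0.
by rewrite !mxE !eqxx !mulr1n.
Qed.

Lemma prodw (t : 'rV[C]_m) i l : (forall i, t 0 i != 0) ->
  \prod_a t 0 a ^ ((a == i)%:Z - (a == l)%:Z) = t 0 i * (t 0 l)^-1.
Proof.
move=> Ht; case: (eqVneq i l) => [<-|nil].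
  rewrite divff // big1 // => a _; by rewrite subrr expr0z.
rewrite (bigD1 i) //= (bigD1 l) /=; last by rewrite eq_sym.
rewrite big1 ?mulr1 => [|a /andP [ai al]]; last by rewrite (negbTE ai) (negbTE al) expr0z.
by rewrite eqxx (negbTE nil) eq_sym (negbTE nil) eqxx /= subr0 sub0r expr1z exprN1.
Qed.

Lemma exp2_inj (a b : int) : (2 : C) ^ a = 2 ^ b -> a = b.
Proof.
have -> : (2 : C) = (2 : R)%:C by rewrite rmorph_nat.
rewrite -!fmorphXz => /fmorph_inj; apply: ieexprIz; first by rewrite ltr0n.
by apply/negP => /eqP; lra.
Qed.

Lemma wchar w : @weight_set R m n w ->
  exists i l : 'I_m, forall a, w 0 a = (a == i)%:Z - (a == l)%:Z.
Proof.
case=> T [[i [j [k [l nz]]]] HT]; exists i, l => c.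
pose t : 'rV[C]_m := \row_a (if a == c then 2 else 1).
have Ht : forall a, t 0 a != 0.
  by move=> a; rewrite mxE; case: ifP => _; rewrite ?oner_eq0 ?pnatr_eq0.
have Pt (f : 'I_m -> int) : \prod_a t 0 a ^ f a = 2 ^ f c.
  rewrite (bigD1 c) //= big1 ?mulr1 => [|a /negbTE ac]; first by rewrite mxE eqxx.
  by rewrite mxE ac exp1rz.
have := HT t Ht i j k l; rewrite tens_diag // => E.
have E' : t 0 i * (t 0 l)^-1 = \prod_a t 0 a ^ w 0 a.
  by apply: (mulIf nz); rewrite -E mulrAC.
move: E'; rewrite -prodw // !Pt => /exp2_inj ->.
done.
Qed.

Lemma wconv (i l : 'I_m) (j0 : 'I_n) :
  @weight_set R m n (\row_a ((a == i)%:Z - (a == l)%:Z)).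
Proof.
exists (fun i' j k l' => if (i' == i) && (l' == l) then 1 else 0); split.
  by exists i, j0, j0, l; rewrite !eqxx oner_eq0.
move=> t Ht i' j k l'; rewrite tens_diag //.
case: ifP => [/andP [/eqP -> /eqP ->]|_]; last by rewrite mulr0 mul0r mulr0.
under eq_bigr do rewrite mxE.
by rewrite prodw // !mulr1.
Qed.

Lemma realvecE (w : 'rV[int]_m) (i l : 'I_m) :
  (forall a, w 0 a = (a == i)%:Z - (a == l)%:Z) -> realvec R w = vec R m i l.
Proof. by move=> Hw; apply/rowP => a; rewrite !mxE Hw intrB. Qed.

Lemma enorm_vec (i l : 'I_m) :
  enorm (vec R m i l) = if i == l then 0 else Num.sqrt 2.
Proof.
rewrite /enorm; case: eqVneq => [<-|nil].
  by rewrite big1 ?sqrtr0 // => a _; rewrite mxE subrr expr0n.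
congr Num.sqrt.
transitivity (\sum_a ((a == i)%:R * 1 + (a == l)%:R * 1) : R).
  apply: eq_bigr => a _; rewrite mxE !mulr1.
  case: eqVneq => [->|_]; case: eqVneq => [el|_] //=.
  - by move: nil; rewrite el eqxx.
  - by rewrite subr0 expr1n addr0.
  - by rewrite sub0r sqrrN expr1n add0r.
  - by rewrite subr0 expr0n addr0.
by rewrite big_split /= !sum_delta.
Qed.

End Weights.
Arguments wchar {R m n w}.
Arguments realvecE {R m w i l}.
Arguments wconv R {m n}.
Arguments core {R m k v src dst}.

Lemma conv_ne (R : realType) (m : nat) (Sr : seq 'rV[R]_m) (hp : (0 < size Sr)%N) :
  conv_hull Sr (Sr`_0).
Proof.
exists (fun a => (a == Ordinal hp)%:R); split.
- by move=> a; rewrite ler0n.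
- rewrite (bigD1 (Ordinal hp)) //= ?eqxx big1 ?addr0 // => a /negbTE ->; done.
- rewrite (bigD1 (Ordinal hp)) //= ?eqxx scale1r big1 ?addr0 // => a /negbTE ->.
  by rewrite scale0r.
Qed.

Lemma conv1 (R : realType) (m : nat) (r : 'rV[R]_m) : conv_hull [:: r] 0 -> r = 0.
Proof.
case=> lam [_ Hs Hx]; move: Hs Hx; rewrite !big_ord1 => -> ; by rewrite scale1r.
Qed.

Theorem mainTheorem12 (R : realType) (m n : nat) (G : set 'M[R[i]]_m) :
  (2 <= m)%N -> (1 <= n)%N ->
  symmetric_subgroup G -> contains_torus G ->
  weight_norm R m n = Num.sqrt 2 /\
  (m%:R : R) `^ (- (3 / 2)) <= weight_margin R m n.
Proof.
move=> hm hn _ _.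
pose i0 : 'I_m := Ordinal (ltnW hm).
pose i1 : 'I_m := Ordinal hm.
have i01 : i0 != i1 by [].
pose j0 : 'I_n := Ordinal hn.
pose w0 : 'rV[int]_m := \row_a ((a == i0)%:Z - (a == i1)%:Z).
have Hw0 : @weight_set R m n w0 := wconv R i0 i1 j0.
have Rw0 : realvec R w0 = vec R m i0 i1 by apply: realvecE => a; rewrite mxE.
split.
  rewrite /weight_norm.
  set E := (X in sup X).
  have ub : ubound E (Num.sqrt 2).
    move=> y [w Hw <-]; have [i [l Hil]] := wchar Hw.
    rewrite (realvecE Hil) enorm_vec; case: ifP => _ //; exact: sqrtr_ge0.
  have ne : E (Num.sqrt 2).
    by exists w0 => //; rewrite Rw0 enorm_vec (negbTE i01).
  apply: le_anti; rewrite ge_sup //=; last by exists (Num.sqrt 2).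
  by apply: sup_upper_bound => //; split; [exists (Num.sqrt 2) | exists (Num.sqrt 2)].
rewrite /weight_margin; apply: lb_le_inf.
  exists (dist0_conv (map (@realvec R m) [:: w0])), [:: w0] => //.
  split => //.
    by move=> s; rewrite inE => /eqP ->.
  move=> /= /conv1; rewrite Rw0 => /rowP /(_ i0); rewrite !mxE eqxx (negbTE i01).
  by rewrite subr0 => /eqP; rewrite oner_eq0.
move=> y [S [Sne Sw Snc] <-].
set Sr := map (@realvec R m) S.
have hp : (0 < size Sr)%N by rewrite size_map; case: (S) Sne.
rewrite /dist0_conv; apply: lb_le_inf.
  by exists (enorm (Sr`_0)), (Sr`_0) => //; apply: conv_ne.
move=> z [x [lam [Hl0 Hl1 ->]] <-].
have Hex : forall a : 'I_(size Sr), exists p : 'I_m * 'I_m, Sr`_a = vec R m p.1 p.2.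
  move=> a; have ha : (a < size S)%N by rewrite -(size_map (@realvec R m)) ltn_ord.
  rewrite /Sr (nth_map 0) //.
  have [i [l Hil]] := wchar (Sw _ (mem_nth 0 ha)).
  by exists (i, l); exact: realvecE Hil.
have [f Hf] := choice Hex.
have Hc := core (v := fun a => Sr`_a) (src := fun a => (f a).1)
  (dst := fun a => (f a).2) Hf Snc lam Hl0 Hl1.
have y0 : 0 <= (m%:R : R) `^ (- (3 / 2)) by apply: powR_ge0.
have Hy : ((m%:R : R) `^ (- (3 / 2))) ^+ 2 = (m%:R ^+ 3)^-1.
  rewrite -powR_mulrn // -powRrM.
  have -> : - (3 / 2) * 2%:R = - (3%:R) :> R by field.
  by rewrite powRN powR_mulrn.
rewrite /enorm -(ger0_norm y0) -sqrtr_sqr Hy ler_sqrt //.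
by apply: sumr_ge0 => b _; apply: sqr_ge0.
Qed.
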